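(* Assume one of the following: (i) $\mathfrak{D}'=\mathfrak{D}$ and $R_1,R_2\in\mathfrak{D}$; (ii) $\mathfrak{T}_a\subseteq\mathfrak{D}'\subseteq\mathfrak{D}$ and $R_1,R_2\in\mathfrak{T}_a$; (iii) $\mathfrak{D}'\in\{\mathfrak{P},\mathfrak{P}^*\}$ and $R_1,R_2\in\mathfrak{D}'$. Then for all $S_1,S_2\in\mathfrak{D}$: if $R_1\sqsubseteq_\Gamma S_1$ and $R_2\sqsubseteq_\Gamma S_2$ with respect to $\mathfrak{D}'$, then $R_1+R_2\sqsubseteq_\Gamma S_1+S_2$ with respect to $\mathfrak{D}'$. Here $+$ denotes the direct (disjoint) sum of digraphs.
   Context: **Digraphs and homomorphisms.** - A digraph $G$ is a pair $(V(G),A(G))$, where $V(G)$ is a finite non-empty set and $A(G)\subseteq V(G)\times V(G)$. Arcs are written $vw$. - $G^*$ is $G$ with all loops $vv$ removed. - A homomorphism $\xi:G\to H$ is a map $V(G)\to V(H)$ with $\xi(v)\xi(w)\in A(H)$ for all $vw\in A(G)$. $\mathcal{H}(G,H)$ is the set of homomorphisms. - A walk is a sequence $v_0,\dots,v_I$ with $I\ge1$ and $v_{i-1}v_i\in A(G)$ for all $i$. It is closed if $v_0=v_I$. **Classes of digraphs.** - $\mathfrak{D}$ is the class of all digraphs. - $\mathfrak{P}$ is the class of finite posets. - $\mathfrak{P}^*=\{P^*:P\in\mathfrak{P}\}$. - $\mathfrak{T}_a=\{G\in\mathfrak{D}: G^*\text{ contains no closed walk}\}$. **Connectivity.** - Two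 vertices $u,w$ are adjacent if $uw\in A(G)$ or $wu\in A(G)$. - For $X\subseteq V(G)$ and $v,w\in X$, the vertices $v$ and $w$ are connected in $X$ if $v=w$, or if there are $z_0=v,\dots,z_I=w$ in $X$ with consecutive terms adjacent. - $\gamma_X(v)$ is the set of $w\in X$ connected to $v$ in $X$. - $\Gamma_\xi(v):=\gamma_{\xi^{-1}(\xi(v))}(v)$. **Schemes.** - $\mathfrak{D}'_r$ is a fixed system of representatives of $\mathfrak{D}'$ up to isomorphism. - A Hom-scheme from $R$ to $S$ with respect to $\mathfrak{D}'$ is a family of maps $\rho_G:\mathcal{H}(G,R)\to\mathcal{H}(G,S)$, $G\in\mathfrak{D}'_r$. - It is strong if all $\rho_G$ are injective. - It is a $\Gamma$-scheme if $\Gamma_{\rho_G(\xi)}(v)=\Gamma_\xi(v)$ for all $G$, $\xi$ and $v$. - $R\sqsubseteq_\Gamma S$ with respect to $\mathfrak{D}'$ means that a strong $\Gamma$-scheme exists. *)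

(* Defs.v *)
From mathcomp Require Import all_boot.
Set Implicit Arguments. Unset Strict Implicit. Unset Printing Implicit Defensive.

Record digraph := Digraph {
  dV :> finType;
  dA : rel dV;
  dV_nonempty : 0 < #|dV| }.

Definition is_hom (G H : digraph) (f : {ffun dV G -> dV H}) : bool :=
  [forall v, forall w, dA v w ==> dA (f v) (f w)].

Definition hom (G H : digraph) := {f : {ffun dV G -> dV H} | is_hom f}.

Definition hom_fun (G H : digraph) (xi : hom G H) : dV G -> dV H := val xi.

Definition fibre_adj (G H : digraph) (xi : hom G H) (v : dV G) : rel (dV G) :=
  fun x y => [&& hom_fun xi x == hom_fun xi v, hom_fun xi y == hom_fun xi v
              & dA x y || dA y x].

(* Gamma_xi(v) = gamma_{xi^{-1}(xi(v))}(v) *)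
Definition Gamma (G H : digraph) (xi : hom G H) (v : dV G) : {set dV G} :=
  [set w | connect (fibre_adj xi v) v w].

Definition classD : digraph -> Prop := fun _ => True.

Definition is_poset (G : digraph) : Prop :=
  reflexive (@dA G) /\ antisymmetric (@dA G) /\ transitive (@dA G).

Definition classP : digraph -> Prop := is_poset.

Definition loopless (G : digraph) : digraph :=
  @Digraph (dV G) (fun x y => (x != y) && dA x y) (dV_nonempty G).

Definition isomorphic (G H : digraph) : Prop :=
  exists f : dV G -> dV H, bijective f /\ forall x y, dA (f x) (f y) = dA x y.

Definition classPstar : digraph -> Prop :=
  fun G => exists P : digraph, is_poset P /\ isomorphic G (loopless P).

(* closed walk v_0,...,v_I (I >= 1) in G: v_0 :: p with p non-empty *)
Definition has_closed_walk (G : digraph) : Prop :=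
  exists (v0 : dV G) (p : seq (dV G)),
    p != [::] /\ path (@dA G) v0 p /\ last v0 p = v0.

Definition classTa : digraph -> Prop :=
  fun G => ~ has_closed_walk (loopless G).

Definition sum_arc (G H : digraph) : rel (dV G + dV H)%type :=
  fun x y => match x, y with
             | inl a, inl b => dA a b
             | inr a, inr b => dA a b
             | _, _ => false
             end.

Lemma sum_nonempty (G H : digraph) : 0 < #|{: (dV G + dV H)%type}|.
Proof. by rewrite card_sum addn_gt0 dV_nonempty. Qed.

Definition dsum (G H : digraph) : digraph :=
  @Digraph (dV G + dV H)%type (@sum_arc G H) (sum_nonempty G H).

(* R ⊑_Γ S w.r.t. D': a strong Γ-scheme exists.  The family is indexed by all
   members of D'. *)
Definition Gamma_le (D' : digraph -> Prop) (R S : digraph) : Prop :=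
  exists rho : forall G : digraph, D' G -> hom G R -> hom G S,
    forall (G : digraph) (hG : D' G),
      injective (rho G hG) /\
      forall (xi : hom G R) (v : dV G), Gamma (rho G hG xi) v = Gamma xi v.

(* Main.v *)
Require Import Defs.
From mathcomp Require Import all_boot.
From Stdlib Require Import ProofIrrelevance Bool.
Set Implicit Arguments. Unset Strict Implicit. Unset Printing Implicit Defensive.


Definition fadj (G : digraph) (X : eqType) (f : dV G -> X) (v : dV G) : rel (dV G) :=
  fun x y => [&& f x == f v, f y == f v & dA x y || dA y x].
Definition Gammaf (G : digraph) (X : eqType) (f : dV G -> X) (v : dV G) : {set dV G} :=
  [set w | connect (fadj f v) v w].
Lemma GammaE (G H : digraph) (xi : hom G H) v : Gamma xi v = Gammaf (hom_fun xi) v.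
Proof. by []. Qed.

Lemma conn_map (T U : finType) (e : rel T) (e' : rel U) (h : T -> U) x :
  (forall a b, connect e x a -> e a b -> e' (h a) (h b)) ->
  forall y, connect e x y -> connect e' (h x) (h y).
Proof.
move=> H y /connectP [p pth ->].
suff: forall z, connect e x z -> connect e' (h x) (h z) -> path e z p ->
  connect e' (h x) (h (last z p)).
  by apply; [exact: connect0 | exact: connect0 | exact: pth].
elim: p {pth} => [|a p IH] z //= c c' /andP [ez pth].
apply: IH pth.
  by apply: connect_trans c (connect1 ez).
by apply: connect_trans c' (connect1 (H _ _ c ez)).
Qed.

Lemma conn_mono (T : finType) (e e' : rel T) x :
  (forall a b, connect e x a -> e a b -> e' a b) ->
  forall y, connect e x y -> connect e' x y.
Proof. exact: (@conn_map T T e e' id). Qed.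

Lemma fadj_sym (G : digraph) (X : eqType) (f : dV G -> X) v : symmetric (fadj f v).
Proof. by move=> x y; rewrite /fadj [dA y x || _]orbC; case: (f x == f v); case: (f y == f v). Qed.

Lemma Gammaf_eq (G : digraph) (X : eqType) (f : dV G -> X) v w :
  w \in Gammaf f v -> f w = f v.
Proof.
rewrite inE => /connectP [p pth ->].
suff: forall z, f z = f v -> path (fadj f v) z p -> f (last z p) = f v by apply.
elim: p {pth} => [|a p IH] z //= _ /andP [ez pth].
by apply: IH pth; case/and3P: ez => _ /eqP.
Qed.

Lemma fadj_eqf (G : digraph) (X : eqType) (f : dV G -> X) u v :
  f u = f v -> fadj f u =2 fadj f v.
Proof. by move=> e x y; rewrite /fadj e. Qed.

Lemma Gammaf_class (G : digraph) (X : eqType) (f : dV G -> X) v w :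
  w \in Gammaf f v -> Gammaf f w = Gammaf f v.
Proof.
move=> wv; have fw := Gammaf_eq wv.
move: wv; rewrite inE => cvw.
have cs : connect_sym (fadj f v) by apply: sym_connect_sym; apply: fadj_sym.
apply/setP => x; rewrite !inE (eq_connect (fadj_eqf fw)).
apply/idP/idP => [cwx| cvx]; first exact: connect_trans cvw cwx.
by apply: connect_trans _ cvx; rewrite cs.
Qed.

Lemma Gammaf_self (G : digraph) (X : eqType) (f : dV G -> X) v : v \in Gammaf f v.
Proof. by rewrite inE connect0. Qed.

Definition dflt (G : digraph) : dV G := enum_val (Ordinal (dV_nonempty G)).

Definition qtype (G : digraph) (Q : {set {set dV G}}) := {B : {set dV G} | B \in Q}.
Definition qarc (G : digraph) (Q : {set {set dV G}}) : rel (qtype Q) :=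
  fun B C => [exists x in val B, exists y in val C, dA x y].
Definition qgraph (G : digraph) (Q : {set {set dV G}}) (ne : 0 < #|{: qtype Q}|) : digraph :=
  @Digraph (qtype Q) (@qarc G Q) ne.

Lemma conn_ind (T : finType) (e : rel T) (P : T -> Prop) x :
  P x -> (forall a b, P a -> e a b -> P b) -> forall y, connect e x y -> P y.
Proof.
move=> Px H y /connectP [p pth ->].
elim: p x Px pth => [|a p IH] z //= Pz /andP [ez pth].
exact: IH (H _ _ Pz ez) pth.
Qed.

Lemma coverP' (T : finType) (Q : {set {set T}}) x :
  reflect (exists2 B, B \in Q & x \in B) (x \in cover Q).
Proof. by rewrite /cover; apply: (iffP bigcupP) => [[B]|[B]]; exists B. Qed.

Definition Qprop (G T R : digraph) (p : dV T -> option (dV R)) (xi : hom G T)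
   (Q : {set {set dV G}}) : Prop :=
  [/\ trivIset Q, set0 \notin Q,
      forall x, (x \in cover Q) = (p (hom_fun xi x) != None) &
      forall B x y, B \in Q -> x \in B -> y \in B -> y \in Gamma xi x].

Definition pinj (T R : digraph) (p : dV T -> option (dV R)) :=
  forall a b r, p a = Some r -> p b = Some r -> a = b.
Definition parc (T R : digraph) (p : dV T -> option (dV R)) :=
  forall a b r s, p a = Some r -> p b = Some s -> dA a b -> dA r s.

Definition barx (G T R : digraph) (p : dV T -> option (dV R)) (xi : hom G T)
  (Q : {set {set dV G}}) (B : qtype Q) : dV R :=
  if [pick x in val B] is Some x then odflt (dflt R) (p (hom_fun xi x)) else dflt R.

Lemma barxE (G T R : digraph) (p : dV T -> option (dV R)) (xi : hom G T) Q :
  Qprop p xi Q -> forall (B : qtype Q) x, x \in val B ->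
  p (hom_fun xi x) = Some (barx p xi B).
Proof.
case=> _ _ hc hg B x xB.
rewrite /barx; case: pickP => [z zB|/(_ x)]; last by rewrite xB.
have e : hom_fun xi z = hom_fun xi x.
  by apply: (Gammaf_eq (f := hom_fun xi)); apply: hg (valP B) xB zB.
have : x \in cover Q by apply/coverP'; exists (val B) => //; exact: valP.
rewrite hc e; by case: (p _).
Qed.

Lemma barx_hom (G T R : digraph) (p : dV T -> option (dV R)) (xi : hom G T) Q
  (hp : parc p) (hq : Qprop p xi Q) (ne : 0 < #|{: qtype Q}|) :
  @is_hom (qgraph ne) R [ffun B => barx p xi B].
Proof.
apply/forallP => B; apply/forallP => C; apply/implyP => /= /existsP [x /andP [xB]].
case/existsP => y /andP [yC axy].
rewrite !ffunE; apply: (hp _ _ _ _ (barxE hq xB) (barxE hq yC)).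
by have := valP xi; move/forallP/(_ x)/forallP/(_ y)/implyP; apply.
Qed.

Definition barxh (G T R : digraph) (p : dV T -> option (dV R)) (xi : hom G T) Q
  (hp : parc p) (hq : Qprop p xi Q) (ne : 0 < #|{: qtype Q}|) : hom (qgraph ne) R :=
  @exist _ (@is_hom (qgraph ne) R) _ (barx_hom hp hq ne).

Definition qpi (G : digraph) (Q : {set {set dV G}}) (ne : 0 < #|{: qtype Q}|) (x : dV G)
  : qtype Q := insubd (dflt (qgraph ne)) (pblock Q x).

Lemma qpiE (G : digraph) (Q : {set {set dV G}}) (ne : 0 < #|{: qtype Q}|) x :
  x \in cover Q -> val (qpi ne x) = pblock Q x.
Proof. by move=> xc; rewrite /qpi insubdK // pblock_mem. Qed.

Lemma qpi_mem (G : digraph) (Q : {set {set dV G}}) (ne : 0 < #|{: qtype Q}|) x :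
  x \in cover Q -> x \in val (qpi ne x).
Proof. by move=> xc; rewrite qpiE // mem_pblock. Qed.

Lemma qpi_def (G : digraph) (Q : {set {set dV G}}) (ne : 0 < #|{: qtype Q}|) (c : qtype Q) x :
  trivIset Q -> x \in val c -> qpi ne x = c.
Proof.
move=> tQ xc; have xC : x \in cover Q by apply/coverP'; exists (val c) => //; exact: valP.
by apply: val_inj; rewrite qpiE // (def_pblock tQ (valP c) xc).
Qed.

Definition lam_gen (D' : digraph -> Prop) (G T R S : digraph)
  (rho : forall H, D' H -> hom H R -> hom H S)
  (p : dV T -> option (dV R)) (xi : hom G T) Q
  (hp : parc p) (hq : Qprop p xi Q) (ne : 0 < #|{: qtype Q}|) (hD : D' (qgraph ne))
  : dV G -> dV S :=
  fun v => hom_fun (rho _ hD (barxh hp hq ne)) (qpi ne v).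

Lemma qarcI (G : digraph) (Q : {set {set dV G}}) (c d : qtype Q) x y :
  x \in val c -> y \in val d -> dA x y -> qarc c d.
Proof. by move=> xc yd a; apply/existsP; exists x; rewrite xc /=; apply/existsP; exists y; rewrite yd. Qed.

Lemma qarcP (G : digraph) (Q : {set {set dV G}}) (c d : qtype Q) :
  qarc c d -> exists x y, [/\ x \in val c, y \in val d & dA x y].
Proof. by case/existsP => x /andP [xc /existsP [y /andP [yd a]]]; exists x, y. Qed.

Lemma hom_arc (G H : digraph) (xi : hom G H) x y : dA x y -> dA (hom_fun xi x) (hom_fun xi y).
Proof. by have := valP xi; move/forallP/(_ x)/forallP/(_ y)/implyP. Qed.

Lemma lam_Gamma (D' : digraph -> Prop) (G T R S : digraph)
  (rho : forall H, D' H -> hom H R -> hom H S)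
  (p : dV T -> option (dV R)) (xi : hom G T) Q
  (hp : parc p) (hq : Qprop p xi Q) (ne : 0 < #|{: qtype Q}|) (hD : D' (qgraph ne))
  (hpi : pinj p)
  (hrho : forall c, Gamma (rho _ hD (barxh hp hq ne)) c = Gamma (barxh hp hq ne) c)
  v (hv : v \in cover Q) (X : eqType) (f : dV G -> X)
  (hf : forall x, f x = f v <-> (x \in cover Q /\
          lam_gen rho hp hq hD x = lam_gen rho hp hq hD v)) :
  Gammaf f v = Gamma xi v.
Proof.
set Z := rho _ hD (barxh hp hq ne).
set Bh := barxh hp hq ne.
have bE : forall c, hom_fun Bh c = barx p xi c by move=> c; rewrite /hom_fun /= ffunE.
have lamE : forall x, lam_gen rho hp hq hD x = hom_fun Z (qpi ne x) by [].
have [tQ s0Q hc hg] := hq.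
have pv : forall x, x \in cover Q -> p (hom_fun xi x) = Some (barx p xi (qpi ne x)).
  by move=> x xc; apply: barxE hq _ _ (qpi_mem ne xc).
have covE : forall x, hom_fun xi x = hom_fun xi v -> x \in cover Q.
  by move=> x e; rewrite hc e -hc.
have claimA : forall b, b \in Gamma xi v -> b \in cover Q /\
     hom_fun Z (qpi ne b) = hom_fun Z (qpi ne v).
  move=> b bv; have eb := Gammaf_eq bv; split; first exact: covE.
  apply: (Gammaf_eq (f := hom_fun Z)); rewrite -GammaE hrho inE.
  move: bv; rewrite inE; apply: conn_map => a b' _ /and3P [/eqP ea /eqP eb' ar].
  have ac := covE _ ea; have bc := covE _ eb'.
  apply/and3P; split.
  - by rewrite !bE; apply/eqP; apply: Some_inj; rewrite -pv // -pv // ea.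
  - by rewrite !bE; apply/eqP; apply: Some_inj; rewrite -pv // -pv // eb'.
  - by case/orP: ar => ar; apply/orP; [left|right];
      apply: qarcI ar; apply: qpi_mem.
apply/setP => w; apply/idP/idP => [wv | wv].
- have fw := Gammaf_eq wv.
  have [wc _] := (hf w).1 fw.
  have hw : qpi ne w \in Gamma Bh (qpi ne v).
    rewrite -hrho inE; move: wv; rewrite inE; apply: conn_map => a b _.
    case/and3P => /eqP fa /eqP fb ar.
    have [ac za] := (hf a).1 fa; have [bc zb] := (hf b).1 fb.
    apply/and3P; split; first by rewrite -!lamE za.
      by rewrite -!lamE zb.
    by case/orP: ar => ar; apply/orP; [left|right]; apply: qarcI ar; apply: qpi_mem.
  move: hw; rewrite inE => hw.
  suff : forall y, y \in val (qpi ne w) -> y \in Gamma xi v by apply; apply: qpi_mem.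
  apply: (@conn_ind _ _ (fun c : qtype Q => forall y, y \in val c -> y \in Gamma xi v) _ _ _ _ hw).
    move=> y; rewrite qpiE // => yv; apply: hg (pblock_mem hv) _ yv.
    by rewrite mem_pblock.
  move=> c d Pc /and3P [/eqP bc /eqP bd ar] y0 y0d.
  have [x [y [xc yd axy]]] : exists x y, [/\ x \in val c, y \in val d & dA x y || dA y x].
    case/orP: ar => /qarcP [x [y [h1 h2 h3]]]; first by exists x, y; rewrite h3.
    by exists y, x; rewrite h3 orbT.
  have xv := Pc _ xc; have ex := Gammaf_eq xv.
  have ey : hom_fun xi y = hom_fun xi v.
    apply: (hpi _ _ (barx p xi d)); first exact: barxE hq _ _ yd.
    by rewrite (pv _ hv) -bE -bd bE.
  have yv : y \in Gamma xi v.
    move: xv; rewrite !inE => xv; apply: connect_trans xv (connect1 _).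
    by rewrite /fibre_adj ex ey eqxx.
  rewrite GammaE -(Gammaf_class yv); exact: hg (valP d) yd y0d.
- move: wv; rewrite inE => wv; rewrite inE; move: wv; apply: conn_mono.
  move=> a b ca eab.
  have av : a \in Gamma xi v by rewrite inE.
  have bv : b \in Gamma xi v by rewrite inE; apply: connect_trans ca (connect1 eab).
  have [ac za] := claimA _ av; have [bc zb] := claimA _ bv.
  have fa := (hf a).2 (conj ac za); have fb := (hf b).2 (conj bc zb).
  case/and3P: eab => _ _ ar.
  by rewrite /fadj fa fb !eqxx.
Qed.

Lemma lam_inj (D' : digraph -> Prop) (G T R S : digraph)
  (rho : forall H, D' H -> hom H R -> hom H S)
  (p : dV T -> option (dV R)) (xi xi' : hom G T) Q
  (hp : parc p) (hq : Qprop p xi Q) (hq' : Qprop p xi' Q)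
  (ne : 0 < #|{: qtype Q}|) (hD : D' (qgraph ne))
  (hpi : pinj p) (hinj : injective (rho _ hD))
  (he : forall x, x \in cover Q -> lam_gen rho hp hq hD x = lam_gen rho hp hq' hD x) :
  forall x, x \in cover Q -> hom_fun xi x = hom_fun xi' x.
Proof.
have [tQ s0Q hc hg] := hq.
have eZ : rho _ hD (barxh hp hq ne) = rho _ hD (barxh hp hq' ne).
  apply: val_inj; apply/ffunP => c.
  have : val c != set0 by apply: contraNneq s0Q => <-; exact: valP.
  case/set0Pn => x xc.
  have xC : x \in cover Q by apply/coverP'; exists (val c) => //; exact: valP.
  have := he x xC; rewrite /lam_gen (qpi_def ne tQ xc); exact.
have eB := hinj _ _ eZ.
move=> x xc; apply: (hpi _ _ (barx p xi (qpi ne x))).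
  exact: barxE hq _ _ (qpi_mem ne xc).
rewrite (barxE hq' (qpi_mem ne xc)).
congr Some.
have := congr1 (fun h : hom (qgraph ne) R => hom_fun h (qpi ne x)) eB.
by rewrite /hom_fun /= !ffunE.
Qed.

Definition Aset (G T R : digraph) (p : dV T -> option (dV R)) (xi : hom G T) : {set dV G} :=
  [set v | p (hom_fun xi v) != None].

Definition Qpart (G T : digraph) (b : bool) (xi : hom G T) (A : {set dV G}) : {set {set dV G}} :=
  if b then [set Gamma xi v | v in A] else [set [set v] | v in A].

Lemma Qpart_prop (G T R : digraph) (p : dV T -> option (dV R)) (xi : hom G T) b :
  Qprop p xi (Qpart b xi (Aset p xi)).
Proof.
have Gcl : forall u x, x \in Gamma xi u -> Gamma xi x = Gamma xi u.
  by move=> u x; rewrite !GammaE; apply: Gammaf_class.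
have Gself : forall u, u \in Gamma xi u by move=> u; rewrite GammaE; apply: Gammaf_self.
have Geq : forall u x, x \in Gamma xi u -> hom_fun xi x = hom_fun xi u.
  by move=> u x; rewrite GammaE; apply: Gammaf_eq.
case: b; rewrite /Qpart; split.
- apply/trivIsetP => B C /imsetP [u _ ->] /imsetP [w _ ->] ne.
  apply/pred0P => x /=; apply/negbTE; apply: contra ne => /andP [xu xw].
  by rewrite -(Gcl _ _ xu) -(Gcl _ _ xw).
- by apply/imsetP => [[u _ e]]; have := Gself u; rewrite -e inE.
- move=> x; apply/idP/idP.
    case/coverP' => B /imsetP [u uA ->] xu.
    by move: uA; rewrite inE (Geq _ _ xu).
  move=> xA; apply/coverP'; exists (Gamma xi x) => //.
  by apply/imsetP; exists x => //; rewrite inE.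
- move=> B x y /imsetP [u _ ->] xu yu; by rewrite (Gcl _ _ xu).
- apply/trivIsetP => B C /imsetP [u _ ->] /imsetP [w _ ->] ne.
  apply/pred0P => x /=; apply/negbTE; apply: contra ne => /andP.
  by rewrite !inE => [[/eqP -> /eqP ->]].
- by apply/imsetP => [[u _ e]]; have := set11 u; rewrite -e inE.
- move=> x; apply/idP/idP.
    case/coverP' => B /imsetP [u uA ->]; rewrite inE => /eqP ->.
    by move: uA; rewrite inE.
  move=> xA; apply/coverP'; exists [set x]; last by rewrite inE.
  by apply/imsetP; exists x => //; rewrite inE.
- by move=> B x y /imsetP [u _ ->]; rewrite !inE => /eqP -> /eqP ->.
Qed.

Definition lam (D' : digraph -> Prop) (G T R S : digraph)
  (rho : forall H, D' H -> hom H R -> hom H S)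
  (p : dV T -> option (dV R)) (xi : hom G T) Q
  (hp : parc p) (hq : Qprop p xi Q) (hD : forall ne : 0 < #|{: qtype Q}|, D' (qgraph ne))
  : dV G -> dV S :=
  match Bool.bool_dec (0 < #|{: qtype Q}|) true with
  | left ne => lam_gen rho hp hq (hD ne)
  | right _ => fun _ => dflt S end.

Lemma lamE (D' : digraph -> Prop) (G T R S : digraph)
  (rho : forall H, D' H -> hom H R -> hom H S)
  (p : dV T -> option (dV R)) (xi : hom G T) Q
  (hp : parc p) (hq : Qprop p xi Q) (hD : forall ne : 0 < #|{: qtype Q}|, D' (qgraph ne))
  (ne : 0 < #|{: qtype Q}|) :
  lam rho hp hq hD = lam_gen rho hp hq (hD ne).
Proof.
rewrite /lam; case: Bool.bool_dec => [e|e]; last by case: e.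
by rewrite (eq_irrelevance e ne).
Qed.

Lemma ne_of_cover (G : digraph) (Q : {set {set dV G}}) x :
  x \in cover Q -> 0 < #|{: qtype Q}|.
Proof.
move=> xc; apply/card_gt0P.
by exists (@exist _ (fun B => B \in Q) (pblock Q x) (pblock_mem xc)).
Qed.

Lemma lam_arc (D' : digraph -> Prop) (G T R S : digraph)
  (rho : forall H, D' H -> hom H R -> hom H S)
  (p : dV T -> option (dV R)) (xi : hom G T) Q
  (hp : parc p) (hq : Qprop p xi Q) (hD : forall ne : 0 < #|{: qtype Q}|, D' (qgraph ne))
  x y : x \in cover Q -> y \in cover Q -> dA x y ->
  dA (lam rho hp hq hD x) (lam rho hp hq hD y).
Proof.
move=> xc yc a; rewrite (lamE _ _ _ _ (ne_of_cover xc)) /lam_gen.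
apply: hom_arc; apply: qarcI a; exact: qpi_mem.
Qed.

Lemma lam_transport (D' : digraph -> Prop) (G T R S : digraph)
  (rho : forall H, D' H -> hom H R -> hom H S)
  (p : dV T -> option (dV R)) (xi xi' : hom G T) Q Q' (EQ : Q = Q')
  (hp : parc p) (hq : Qprop p xi Q) (hq' : Qprop p xi' Q')
  (hD : forall ne : 0 < #|{: qtype Q}|, D' (qgraph ne))
  (hD' : forall ne : 0 < #|{: qtype Q'}|, D' (qgraph ne))
  (hpi : pinj p) (hinj : forall ne (h : D' (qgraph (Q := Q) ne)), injective (rho _ h))
  (he : forall x, x \in cover Q -> lam rho hp hq hD x = lam rho hp hq' hD' x) :
  forall x, x \in cover Q -> hom_fun xi x = hom_fun xi' x.
Proof.
subst Q'.
move=> x xc; have ne := ne_of_cover xc.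
move: he; rewrite (lamE _ _ _ _ ne) (lamE _ _ _ _ ne) => he.
rewrite (proof_irrelevance _ (hD' ne) (hD ne)) in he.
exact: lam_inj (hinj ne (hD ne)) he x xc.
Qed.

Definition pL (R1 R2 : digraph) : dV (dsum R1 R2) -> option (dV R1) :=
  fun a => if a is inl r then Some r else None.
Definition pR (R1 R2 : digraph) : dV (dsum R1 R2) -> option (dV R2) :=
  fun a => if a is inr r then Some r else None.

Lemma parcL R1 R2 : parc (@pL R1 R2).
Proof. by case=> a [] b r s //= [<-] [<-]. Qed.
Lemma parcR R1 R2 : parc (@pR R1 R2).
Proof. by case=> a [] b r s //= [<-] [<-]. Qed.
Lemma pinjL R1 R2 : pinj (@pL R1 R2).
Proof. by case=> a [] b r //= [->] [->]. Qed.
Lemma pinjR R1 R2 : pinj (@pR R1 R2).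
Proof. by case=> a [] b r //= [->] [->]. Qed.

Definition good (D' : digraph -> Prop) (b : bool) (R1 R2 : digraph) : Prop :=
  forall G (hG : D' G) (xi : hom G (dsum R1 R2)),
    (forall ne : 0 < #|{: qtype (Qpart b xi (Aset (@pL R1 R2) xi))}|, D' (qgraph ne)) /\
    (forall ne : 0 < #|{: qtype (Qpart b xi (Aset (@pR R1 R2) xi))}|, D' (qgraph ne)).

Definition etaf (D' : digraph -> Prop) (R1 R2 S1 S2 : digraph)
  (rho1 : forall H, D' H -> hom H R1 -> hom H S1)
  (rho2 : forall H, D' H -> hom H R2 -> hom H S2)
  b (hg : good D' b R1 R2) G (hG : D' G) (xi : hom G (dsum R1 R2)) :
  dV G -> dV (dsum S1 S2) :=
  fun v => match hom_fun xi v with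
  | inl _ => inl (lam rho1 (@parcL R1 R2) (Qpart_prop (@pL R1 R2) xi b) (proj1 (hg G hG xi)) v)
  | inr _ => inr (lam rho2 (@parcR R1 R2) (Qpart_prop (@pR R1 R2) xi b) (proj2 (hg G hG xi)) v)
  end.

Lemma coverL (G R1 R2 : digraph) (xi : hom G (dsum R1 R2)) b x :
  (x \in cover (Qpart b xi (Aset (@pL R1 R2) xi))) = (@pL R1 R2 (hom_fun xi x) != None).
Proof. by have [_ _ h _] := Qpart_prop (@pL R1 R2) xi b. Qed.
Lemma coverR (G R1 R2 : digraph) (xi : hom G (dsum R1 R2)) b x :
  (x \in cover (Qpart b xi (Aset (@pR R1 R2) xi))) = (@pR R1 R2 (hom_fun xi x) != None).
Proof. by have [_ _ h _] := Qpart_prop (@pR R1 R2) xi b. Qed.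

Lemma eta_hom (D' : digraph -> Prop) (R1 R2 S1 S2 : digraph)
  (rho1 : forall H, D' H -> hom H R1 -> hom H S1)
  (rho2 : forall H, D' H -> hom H R2 -> hom H S2)
  b (hg : good D' b R1 R2) G (hG : D' G) (xi : hom G (dsum R1 R2)) :
  @is_hom G (dsum S1 S2) [ffun v => etaf rho1 rho2 hg hG xi v].
Proof.
apply/forallP => v; apply/forallP => w; apply/implyP => a; rewrite !ffunE /etaf.
have := hom_arc xi a.
case E1 : (hom_fun xi v) => [r|r]; case E2 : (hom_fun xi w) => [s|s] //= _.
  by apply: lam_arc a; rewrite coverL ?E1 ?E2.
by apply: lam_arc a; rewrite coverR ?E1 ?E2.
Qed.

Definition eta (D' : digraph -> Prop) (R1 R2 S1 S2 : digraph)
  (rho1 : forall H, D' H -> hom H R1 -> hom H S1)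
  (rho2 : forall H, D' H -> hom H R2 -> hom H S2)
  b (hg : good D' b R1 R2) G (hG : D' G) (xi : hom G (dsum R1 R2)) : hom G (dsum S1 S2) :=
  @exist _ (@is_hom G (dsum S1 S2)) _ (eta_hom rho1 rho2 hg hG xi).

Definition scheme_ok (D' : digraph -> Prop) (R S : digraph)
  (rho : forall H, D' H -> hom H R -> hom H S) : Prop :=
  forall (H : digraph) (hH : D' H), injective (rho H hH) /\
      forall (xi : hom H R) (v : dV H), Gamma (rho H hH xi) v = Gamma xi v.

Lemma eta_Gamma (D' : digraph -> Prop) (R1 R2 S1 S2 : digraph)
  (rho1 : forall H, D' H -> hom H R1 -> hom H S1)
  (rho2 : forall H, D' H -> hom H R2 -> hom H S2)
  (h1 : scheme_ok rho1) (h2 : scheme_ok rho2)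
  b (hg : good D' b R1 R2) G (hG : D' G) (xi : hom G (dsum R1 R2)) :
  forall v, Gamma (eta rho1 rho2 hg hG xi) v = Gamma xi v.
Proof.
move=> v; rewrite GammaE.
have etaE : forall x, hom_fun (eta rho1 rho2 hg hG xi) x = etaf rho1 rho2 hg hG xi x.
  by move=> x; rewrite /hom_fun /= ffunE.
case E: (hom_fun xi v) => [r|r].
- have hv : v \in cover (Qpart b xi (Aset (@pL R1 R2) xi)) by rewrite coverL E.
  pose ne := ne_of_cover hv.
  apply: (@lam_Gamma D' G _ _ _ rho1 _ xi _ (@parcL R1 R2) (Qpart_prop _ xi b) ne
            (proj1 (hg G hG xi) ne) (@pinjL R1 R2) _ v hv).
    by move=> c; apply: (h1 _ _).2.
  move=> x; rewrite !etaE /etaf E -(lamE _ _ _ _ ne) coverL.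
  case: (hom_fun xi x) => [s|s] /=; split.
  + by case=> ->.
  + by case=> _ ->.
  + by [].
  + by case.
- have hv : v \in cover (Qpart b xi (Aset (@pR R1 R2) xi)) by rewrite coverR E.
  pose ne := ne_of_cover hv.
  apply: (@lam_Gamma D' G _ _ _ rho2 _ xi _ (@parcR R1 R2) (Qpart_prop _ xi b) ne
            (proj2 (hg G hG xi) ne) (@pinjR R1 R2) _ v hv).
    by move=> c; apply: (h2 _ _).2.
  move=> x; rewrite !etaE /etaf E -(lamE _ _ _ _ ne) coverR.
  case: (hom_fun xi x) => [s|s] /=; split.
  + by [].
  + by case.
  + by case=> ->.
  + by case=> _ ->.
Qed.

Lemma eta_inj (D' : digraph -> Prop) (R1 R2 S1 S2 : digraph)
  (rho1 : forall H, D' H -> hom H R1 -> hom H S1)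
  (rho2 : forall H, D' H -> hom H R2 -> hom H S2)
  (h1 : scheme_ok rho1) (h2 : scheme_ok rho2)
  b (hg : good D' b R1 R2) G (hG : D' G) :
  injective (eta rho1 rho2 hg hG).
Proof.
move=> xi xi' e.
have etaE : forall xi0 x, hom_fun (eta rho1 rho2 hg hG xi0) x = etaf rho1 rho2 hg hG xi0 x.
  by move=> xi0 x; rewrite /hom_fun /= ffunE.
have ev : forall x, etaf rho1 rho2 hg hG xi x = etaf rho1 rho2 hg hG xi' x.
  by move=> x; rewrite -!etaE e.
have sideL : forall x, (@pL R1 R2 (hom_fun xi x) != None) = (@pL R1 R2 (hom_fun xi' x) != None).
  move=> x; have := ev x; rewrite /etaf.
  by case: (hom_fun xi x); case: (hom_fun xi' x).
have sideR : forall x, (@pR R1 R2 (hom_fun xi x) != None) = (@pR R1 R2 (hom_fun xi' x) != None).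
  move=> x; have := ev x; rewrite /etaf.
  by case: (hom_fun xi x); case: (hom_fun xi' x).
have gam : forall v, Gamma xi v = Gamma xi' v.
  by move=> v; rewrite -(eta_Gamma h1 h2 hg hG xi) -(eta_Gamma h1 h2 hg hG xi') e.
have AL : Aset (@pL R1 R2) xi = Aset (@pL R1 R2) xi' by apply/setP => x; rewrite !inE sideL.
have AR : Aset (@pR R1 R2) xi = Aset (@pR R1 R2) xi' by apply/setP => x; rewrite !inE sideR.
have QL : Qpart b xi (Aset (@pL R1 R2) xi) = Qpart b xi' (Aset (@pL R1 R2) xi').
  by rewrite -AL /Qpart; case: ifP => _ //; apply: eq_imset.
have QR : Qpart b xi (Aset (@pR R1 R2) xi) = Qpart b xi' (Aset (@pR R1 R2) xi').
  by rewrite -AR /Qpart; case: ifP => _ //; apply: eq_imset.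
apply: val_inj; apply/ffunP => x.
change (hom_fun xi x = hom_fun xi' x).
case E: (hom_fun xi x) => [r|r].
- rewrite -E; apply: (@lam_transport _ _ _ _ _ rho1 _ xi xi' _ _ QL (@parcL R1 R2) (Qpart_prop _ xi b) (Qpart_prop _ xi' b)
     (proj1 (hg G hG xi)) (proj1 (hg G hG xi')) (@pinjL R1 R2)).
  + by move=> ne h; apply: (h1 _ h).1.
  + move=> y; rewrite coverL => yc; have := ev y; rewrite /etaf.
    move: yc; case: (hom_fun xi y) => [s|s] //= _; case: (hom_fun xi' y) => [s'|s'] //= [] -> //.
  + by rewrite coverL E.
- rewrite -E; apply: (@lam_transport _ _ _ _ _ rho2 _ xi xi' _ _ QR (@parcR R1 R2) (Qpart_prop _ xi b) (Qpart_prop _ xi' b)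
     (proj2 (hg G hG xi)) (proj2 (hg G hG xi')) (@pinjR R1 R2)).
  + by move=> ne h; apply: (h2 _ h).1.
  + move=> y; rewrite coverR => yc; have := ev y; rewrite /etaf.
    move: yc; case: (hom_fun xi y) => [s|s] //= _; case: (hom_fun xi' y) => [s'|s'] //= [] -> //.
  + by rewrite coverR E.
Qed.

Theorem generic (D' : digraph -> Prop) (R1 R2 S1 S2 : digraph) b :
  good D' b R1 R2 -> Gamma_le D' R1 S1 -> Gamma_le D' R2 S2 ->
  Gamma_le D' (dsum R1 R2) (dsum S1 S2).
Proof.
move=> hg [rho1 h1] [rho2 h2].
exists (fun G hG => eta rho1 rho2 hg hG) => G hG; split.
  exact: (eta_inj h1 h2).
by move=> xi v; apply: (eta_Gamma h1 h2).
Qed.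

Lemma quot_Ta (G T R : digraph) (p : dV T -> option (dV R)) (xi : hom G T)
  (hp : parc p) (hpi : pinj p) (hR : classTa R)
  (ne : 0 < #|{: qtype (Qpart true xi (Aset p xi))}|) : classTa (qgraph ne).
Proof.
set Q := Qpart true xi (Aset p xi).
have hq : Qprop p xi Q := Qpart_prop p xi true.
set f := barx p xi (Q := Q).
have key : forall c d : qtype Q, c != d -> qarc c d -> (f c != f d) && dA (f c) (f d).
  move=> c d cd a; apply/andP; split; last first.
    have := hom_arc (barxh hp hq ne) a; by rewrite /hom_fun /= !ffunE.
  apply: contra cd => /eqP fcd.
  have [x [y [xc yd axy]]] := qarcP a.
  have exy : hom_fun xi x = hom_fun xi y.
    by apply: (hpi _ _ (f c)); [exact: barxE hq _ _ xc | rewrite fcd; exact: barxE hq _ _ yd].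
  have yx : y \in Gamma xi x.
    by rewrite inE; apply: connect1; rewrite /fibre_adj exy eqxx axy.
  have cls : forall (e : qtype Q) z, z \in val e -> Gamma xi z = val e.
    move=> e z ze; have := valP e; rewrite /Q /Qpart => /imsetP [u _ eu].
    by rewrite eu !GammaE; apply: Gammaf_class; rewrite -GammaE -eu.
  apply/eqP; apply: val_inj; rewrite -(cls _ _ xc) -(cls _ _ yd).
  by rewrite !GammaE (Gammaf_class yx).
move=> [v0 [s [sne [pth lst]]]]; apply: hR.
exists (f v0), (map f s); split; first by move: sne; case: (s).
split; last by rewrite last_map lst.
move: pth; apply: homo_path => c d /= /andP [cd a]; exact: key.
Qed.

Lemma qsing (G T : digraph) (xi : hom G T) A (c : qtype (Qpart false xi A)) :
  exists u, val c = [set u].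
Proof. by have := valP c; rewrite /Qpart => /imsetP [u _ ->]; exists u. Qed.

Lemma qarc_sing (G : digraph) (Q : {set {set dV G}}) (c d : qtype Q) u v :
  val c = [set u] -> val d = [set v] -> qarc c d = dA u v.
Proof.
move=> ec ed; apply/idP/idP => [/qarcP [x [y [xc yd a]]]|a].
  by move: xc yd a; rewrite ec ed !inE => /eqP -> /eqP ->.
by apply: (qarcI (x := u) (y := v)); rewrite ?ec ?ed ?inE.
Qed.

Lemma quot_P (G T : digraph) (xi : hom G T) A (hG : is_poset G)
  (ne : 0 < #|{: qtype (Qpart false xi A)}|) : is_poset (qgraph ne).
Proof.
case: hG => rf [ans tr]; split; [|split].
- move=> c; have [u eu] := qsing c; by rewrite /= (qarc_sing eu eu) rf.
- move=> c d; have [u eu] := qsing c; have [v ev] := qsing d.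
  rewrite /= (qarc_sing eu ev) (qarc_sing ev eu) => h.
  by apply: val_inj; rewrite eu ev (ans _ _ h).
- move=> d c e; have [u eu] := qsing c; have [v ev] := qsing d; have [w ew] := qsing e.
  rewrite /= (qarc_sing eu ev) (qarc_sing ev ew) (qarc_sing eu ew); exact: tr.
Qed.

Lemma quot_Pstar (G T : digraph) (xi : hom G T) A (hG : classPstar G)
  (ne : 0 < #|{: qtype (Qpart false xi A)}|) : classPstar (qgraph ne).
Proof.
case: hG => P [[rf [ans tr]] [g [gb ga]]].
have irr : forall x : dV G, dA x x = false by move=> x; rewrite -(ga x x) /= eqxx.
have trG : forall x y z : dV G, dA x y -> dA y z -> dA x z.
  move=> x y z; rewrite -(ga x y) -(ga y z) -(ga x z) /= => /andP [nxy axy] /andP [nyz ayz].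
  rewrite (tr _ _ _ axy ayz) andbT; apply: contraNneq nxy => exz.
  by apply/eqP; apply: ans; rewrite axy /= exz.
set Q := Qpart false xi A.
have irrH : forall c : qtype Q, qarc c c = false.
  by move=> c; have [u eu] := @qsing G T xi A c; rewrite (qarc_sing eu eu) irr.
have trH : forall c d e : qtype Q, qarc c d -> qarc d e -> qarc c e.
  move=> c d e; have [u eu] := @qsing G T xi A c; have [v ev] := @qsing G T xi A d; have [w ew] := @qsing G T xi A e.
  rewrite (qarc_sing eu ev) (qarc_sing ev ew) (qarc_sing eu ew); exact: trG.
exists (@Digraph (qtype Q) (fun c d => (c == d) || qarc c d) ne); split.
  split; [|split].
  - by move=> c /=; rewrite eqxx.
  - move=> c d /= /andP [/orP [/eqP //|a1] /orP [/eqP //|a2]].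
    by have := trH _ _ _ a1 a2; rewrite irrH.
  - move=> d c e /= /orP [/eqP ->//|a1] /orP [/eqP <-|a2]; first by rewrite a1 orbT.
    by rewrite (trH _ _ _ a1 a2) orbT.
exists id; split; first by exists id.
move=> c d /=; case: eqVneq => [->|_] /=; by rewrite ?irrH.
Qed.
Unset Implicit Arguments.

Theorem corollary6 (D' : digraph -> Prop) (R1 R2 : digraph) :
  ((forall G, D' G <-> classD G)
   \/ ((forall G, classTa G -> D' G) /\ classTa R1 /\ classTa R2)
   \/ (((forall G, D' G <-> classP G) \/ (forall G, D' G <-> classPstar G))
       /\ D' R1 /\ D' R2)) ->
  forall S1 S2 : digraph,
    Gamma_le D' R1 S1 -> Gamma_le D' R2 S2 ->
    Gamma_le D' (dsum R1 R2) (dsum S1 S2).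
Proof.
move=> H S1 S2 g1 g2.
case: H => [hD | [[hT [t1 t2]] | [[hP|hP] _]]].
- apply: (@generic D' R1 R2 S1 S2 true) g1 g2 => G hG xi.
  by split => ne; apply/hD.
- apply: (@generic D' R1 R2 S1 S2 true) g1 g2 => G hG xi.
  split => ne; apply: hT; apply: quot_Ta => //.
  + exact: parcL.
  + exact: pinjL.
  + exact: parcR.
  + exact: pinjR.
- apply: (@generic D' R1 R2 S1 S2 false) g1 g2 => G hG xi.
  by split => ne; apply/hP; apply: quot_P; apply/hP.
- apply: (@generic D' R1 R2 S1 S2 false) g1 g2 => G hG xi.
  by split => ne; apply/hP; apply: quot_Pstar; apply/hP.
Qed.
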